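(* Let $q=p^n$ with $p>2$ prime, let $g\ge 2$ be an integer with $\gcd(g,p)=1$, and let $c\in\mathbb{F}_q$ be such that $C': y^2=x^{2g+1}+c\,x^{g+1}+x$ is a (nonsingular) hyperelliptic curve of genus $g$ over $\mathbb{F}_q$. Let $s$ be the involution $s:(x,y)\mapsto\left(\frac1x,\frac{y}{x^{g+1}}\right)$ of $C'$ and $\omega:(x,y)\mapsto(x,-y)$ the hyperelliptic involution. Then: 1. The quotient curve $C'/\langle s\rangle$ is given (i.e. is birationally equivalent over $\mathbb{F}_q$ to the curve given) by $X_1': y^2=D_g(x)+c$ if $g$ is odd, and by $X_1': y^2=(x+2)(D_g(x)+c)$ if $g$ is even. 2. The quotient curve $C'/\langle s\omega\rangle$, where $s\omega:(x,y)\mapsto\left(\frac1x,-\frac{y}{x^{g+1}}\right)$, is given by $X_2': y^2=(x^2-4)(D_g(x)+c)$ if $g$ is odd, and by $X_2': y^2=(x-2)(D_g(x)+c)$ if $g$ is even.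
   Context: For $m\ge1$ and $\alpha$ in a field, the Dickson polynomial $D_m(x,\alpha)=\sum_{i=0}^{\lfloor m/2\rfloor}\frac{m}{m-i}\binom{m-i}{i}(-\alpha)^i x^{m-2i}$ is the unique polynomial satisfying $D_m\!\left(u+\frac{\alpha}{u},\alpha\right)=u^m+\left(\frac{\alpha}{u}\right)^m$; we write $D_m(x):=D_m(x,1)$. *)

(* Defs.v *)
From HB Require Import structures.
From mathcomp Require Import all_boot all_order all_algebra all_field.
Set Implicit Arguments. Unset Strict Implicit. Unset Printing Implicit Defensive.
Import Order.TTheory GRing.Theory Num.Theory.
Local Open Scope ring_scope.

Section Hyper.
Variable F : fieldType.

(* Dickson polynomial D_m(x) = D_m(x,1), coefficient m/(m-i) * C(m-i,i)
   (an integer) computed as the exact nat quotient (m * C(m-i,i)) / (m-i). *)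
Definition dickson (m : nat) : {poly F} :=
  \sum_(i < (m./2).+1)
     ((-1) ^+ i * ((m * 'C(m - i, i)) %/ (m - i))%N%:R) *: 'X^(m - 2 * i).

Definition Cpoly (g : nat) (c : F) : {poly F} :=
  'X^(2 * g + 1) + c *: 'X^(g + 1) + 'X.

Notation Fx := {fraction {poly F}}.
Definition xF : Fx := tofrac 'X.
Definition embP (p : {poly F}) : Fx := tofrac p.

Definition pevalF (p : {poly F}) (t : Fx) : Fx :=
  (map_poly (fun a : F => tofrac (a%:P)) p).[t].

Definition subst_inv (r : Fx) : Fx :=
  let e := frac (repr r) in pevalF e.1 (xF^-1) / pevalF e.2 (xF^-1).

(* The function field F(C) of y^2 = f(x): elements a + b*y with a,b in F(x),
   represented as pairs (a, b). *)
Definition K := (Fx * Fx)%type.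
Definition kzero : K := (0, 0).
Definition kadd (z w : K) : K := (z.1 + w.1, z.2 + w.2).
Definition kmul (f : {poly F}) (z w : K) : K :=
  (z.1 * w.1 + embP f * z.2 * w.2, z.1 * w.2 + z.2 * w.1).
Definition kconst (a : F) : K := (embP a%:P, 0).
Definition keval (f : {poly F}) (P : {poly F}) (u : K) : K :=
  foldr (fun a acc => kadd (kconst a) (kmul f acc u)) kzero P.

(* Pullbacks of the involutions of C' on its function field:
   s : (x,y) |-> (1/x, y/x^(g+1)),  s w : (x,y) |-> (1/x, -y/x^(g+1)). *)
Definition inv_s (g : nat) (z : K) : K :=
  (subst_inv z.1, subst_inv z.2 / xF ^+ g.+1).
Definition inv_sw (g : nat) (z : K) : K :=
  (subst_inv z.1, - (subst_inv z.2 / xF ^+ g.+1)).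

(* "C/<t> is birationally equivalent over F to the curve Y^2 = h(X)":
   the fixed field F(C)^t is F-isomorphic to the function field
   F(X)[Y]/(Y^2 - h(X)) of that curve, i.e. there are t-invariant u, v in
   F(C) with v^2 = h(u), such that the induced map F[X,Y]/(Y^2-h) -> F(C)
   (X |-> u, Y |-> v) is injective, and every t-invariant element is a
   quotient of elements of its image (so the induced map on the fraction
   field is onto F(C)^t). *)
Definition quotient_model (f : {poly F}) (t : K -> K) (h : {poly F}) : Prop :=
  exists u v : K,
    [/\ t u = u, t v = v,
        kmul f v v = keval f h u,
        (forall A B : {poly F},
            kadd (keval f A u) (kmul f (keval f B u) v) = kzero ->
            A = 0 /\ B = 0)
      & (forall z : K, t z = z ->
            exists A B D : {poly F},
              D != 0 /\
              kmul f z (keval f D u) = kadd (keval f A u) (kmul f (keval f B u) v))].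

End Hyper.

(* Main.v *)
Require Import Defs.
From HB Require Import structures.
From mathcomp Require Import all_boot all_order all_algebra all_field.
From mathcomp Require Import ring zify.
Import GRing.Theory.
Local Open Scope ring_scope.

Definition da (m i : nat) : nat := ((m * 'C(m - i, i)) %/ (m - i))%N.

Lemma da_zero m i : (m./2 < i)%N -> da m i = 0%N.
Proof. by move=> h; rewrite /da bin_small ?muln0 ?div0n //; lia. Qed.

Lemma da0 m : (0 < m)%N -> da m 0 = 1%N.
Proof. by move=> h; rewrite /da subn0 bin0 muln1 divnn h. Qed.

Definition db (m i : nat) : nat :=
  ('C(m - i, i) + if i is k.+1 then 'C(m - i - 1, k) else 0)%N.

Lemma da_db m i : (i < m)%N -> da m i = db m i.
Proof.
move=> h; rewrite /da /db.
have -> : (m * 'C(m - i, i) = (m - i) * db m i)%N.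
  rewrite /db; case: i h => [|k] h; first by rewrite !subn0 addn0.
  rewrite mulnDr.
  have e : (m - k.+1 - 1 = (m - k.+1).-1)%N by lia.
  rewrite e mul_bin_diag.
  have -> : (m = (m - k.+1) + k.+1)%N by lia.
  rewrite -!addnBA // subnn addn0 mulnDl. lia.
by rewrite /db mulKn //; lia.
Qed.

Lemma da_rec m j : (1 <= m)%N -> (j < m)%N ->
  da m.+2 j.+1 = (da m.+1 j.+1 + da m j)%N.
Proof.
move=> h1 h2; rewrite !da_db //; try lia.
rewrite /db.
have -> : (m.+2 - j.+1 = (m - j).+1)%N by lia.
have -> : (m.+1 - j.+1 = (m - j))%N by lia.
have -> : ((m - j).+1 - 1 = (m - j))%N by lia.
rewrite binS.
case: j h2 => [|k] h2.
  rewrite !subn0 bin0 addn0.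
  have -> : (m - 1 = m.-1)%N by lia.
  have -> : m = (m.-1).+1 by lia.
  rewrite binS !bin0. lia.
have E : 'C(m - k.+1, k.+1) = ('C(m - k.+1 - 1, k.+1) + 'C(m - k.+1 - 1, k))%N.
  by rewrite -binS; congr binomial; lia.
rewrite [X in (_ + X = _)%N]E. lia.
Qed.

Section DickRing.
Variable R : fieldType.

Definition dS (t : R) (m : nat) : R :=
  \sum_(i < m) ((-1) ^+ i * (da m i)%:R) * t ^+ (m - 2 * i).

Lemma dS_rec t m : (1 <= m)%N -> dS t m.+2 = t * dS t m.+1 - dS t m.
Proof.
move=> hm; rewrite /dS big_ord_recl big_ord_recr /= (@da_zero m.+2 (bump 0 m)); last by rewrite /bump; lia.
rewrite mulr0n mulr0 mul0r addr0.
rewrite [in t * _]big_ord_recl mulrDr.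
rewrite !da0 // expr0 !mul1r muln0 !subn0 -exprS -addrA; congr (_ + _).
rewrite mulr_sumr -sumrB; apply: eq_bigr => j _.
rewrite /bump /= !add1n /bump /= !add1n da_rec //.
have e1 : (m.+2 - 2 * j.+1 = m - 2 * j)%N by lia.
rewrite e1.
case: (leqP (2 * j.+1) m.+1) => hj.
  have -> : (m - 2 * j = (m.+1 - 2 * j.+1).+1)%N by lia.
  rewrite natrD !exprS; ring.
rewrite (@da_zero m.+1 j.+1); last by lia.
rewrite add0n !exprS; ring.
Qed.

Lemma dS_val (y : R) m : y != 0 -> (1 <= m)%N ->
  dS (y + y^-1) m = y ^+ m + y ^- m.
Proof.
move=> y0 hm.
suff H : forall n, dS (y + y^-1) n.+1 = y ^+ n.+1 + y ^- n.+1 /\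
                   dS (y + y^-1) n.+2 = y ^+ n.+2 + y ^- n.+2.
  by case: m hm => // n _; case: (H n).
elim=> [|n [IH1 IH2]].
  rewrite /dS !big_ord_recr !big_ord0 /= !add0r.
  rewrite !da0 // /da (_ : (2 * 'C(2 - 1, 1)) %/ (2 - 1) = 2)%N //=.
  split; first by field.
  by field.
split=> //; rewrite dS_rec // IH1 IH2.
rewrite !exprS !invrM ?unitfE ?expf_neq0 //.
field. all: try (repeat (apply/andP; split); repeat apply: mulf_neq0; by rewrite ?expf_neq0).
Qed.

End DickRing.

Lemma frac_repr (R : idomainType) (r : {fraction R}) :
  r = tofrac (frac (repr r)).1 / tofrac (frac (repr r)).2.
Proof.
rewrite -[r in LHS](reprK r).
set x := repr r.
unlock tofrac.
set n := (frac x).1. set d := (frac x).2.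
transitivity (FracField.mul (\pi_({fraction R})%qT (Ratio n 1))
    (FracField.inv (\pi_({fraction R})%qT (Ratio d 1)))); last by [].
rewrite -FracField.pi_inv -FracField.pi_mul.
have dn0 : d != 0 by exact: denom_ratioP.
apply/eqmodP. rewrite /= FracField.equivfE.
rewrite /FracField.mulf /FracField.invf !numden_Ratio ?oner_neq0 ?mul1r //.
by rewrite mulr1 mulrC.
Qed.

Arguments frac_repr {R} r.
Section Inf.
Variable F : fieldType.
Local Notation Fx := {fraction {poly F}}.
Local Notation X := (xF F).
Implicit Types (p q : {poly F}) (t : Fx).

Lemma cm (t : Fx) : commr_rmorph ((@tofrac _ : {poly F} -> Fx) \o polyC) t.
Proof. by move=> a; rewrite /GRing.comm mulrC. Qed.

Lemma pevalE p t : pevalF p t = horner_morph (cm t) p.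
Proof. by []. Qed.

Lemma peval_add p q t : pevalF (p + q) t = pevalF p t + pevalF q t.
Proof. by rewrite !pevalE rmorphD. Qed.
Lemma peval_sub p q t : pevalF (p - q) t = pevalF p t - pevalF q t.
Proof. by rewrite !pevalE rmorphB. Qed.
Lemma peval_N p t : pevalF (- p) t = - pevalF p t.
Proof. by rewrite !pevalE rmorphN. Qed.
Lemma peval_mul p q t : pevalF (p * q) t = pevalF p t * pevalF q t.
Proof. by rewrite !pevalE rmorphM. Qed.
Lemma peval_exp p n t : pevalF (p ^+ n) t = pevalF p t ^+ n.
Proof. by rewrite !pevalE rmorphXn. Qed.
Lemma peval_C a t : pevalF a%:P t = tofrac a%:P.
Proof. by rewrite pevalE horner_morphC. Qed.
Lemma peval_X t : pevalF 'X t = t.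
Proof. by rewrite pevalE horner_morphX. Qed.
Lemma peval_Xn n t : pevalF 'X^n t = t ^+ n.
Proof. by rewrite peval_exp peval_X. Qed.
Lemma peval_Z a p t : pevalF (a *: p) t = tofrac a%:P * pevalF p t.
Proof. by rewrite -mul_polyC peval_mul peval_C. Qed.
Lemma peval_0 t : pevalF 0 t = 0.
Proof. by rewrite pevalE rmorph0. Qed.
Lemma peval_1 t : pevalF 1 t = 1.
Proof. by rewrite pevalE rmorph1. Qed.
Lemma peval_nat n t : pevalF n%:R t = n%:R.
Proof. by rewrite pevalE rmorph_nat. Qed.
Lemma peval_sum I (r : seq I) (P : pred I) (G : I -> {poly F}) t :
  pevalF (\sum_(i <- r | P i) G i) t = \sum_(i <- r | P i) pevalF (G i) t.
Proof. by rewrite pevalE rmorph_sum. Qed.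

Lemma peval_x p : pevalF p X = tofrac p.
Proof.
elim/poly_ind: p => [|p c IH]; first by rewrite peval_0 rmorph0.
by rewrite peval_add peval_mul IH peval_X peval_C /xF rmorphD rmorphM.
Qed.

Lemma X_neq0 : X != 0.
Proof. by rewrite /xF tofrac_eq0 polyX_eq0. Qed.

Lemma keval_fst (f P : {poly F}) (a : Fx) : keval f P (a, 0) = (pevalF P a, 0).
Proof.
rewrite /keval -[in RHS](polyseqK P).
elim: (polyseq P) => [|c s IH] /=; first by rewrite peval_0.
rewrite IH /kadd /kmul /kconst /= cons_poly_def peval_add peval_mul peval_X peval_C.
by congr pair; rewrite ?mulr0 ?mul0r ?addr0 ?add0r // addrC.
Qed.


Lemma tofracX n : tofrac ('X^n : {poly F}) = X ^+ n.
Proof. by rewrite rmorphXn. Qed.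

Lemma peval_inv_neq0 d : d != 0 -> pevalF d X^-1 != 0.
Proof.
move=> d0.
set n := (size d).-1.
have hn : (n < size d)%N by rewrite /n prednK // lt0n size_poly_eq0.
pose Q := \sum_(i < size d) d`_i *: ('X^(n - i) : {poly F}).
have eq : pevalF d X^-1 * X ^+ n = tofrac Q.
  rewrite -[d in LHS]coefK poly_def peval_sum mulr_suml rmorph_sum.
  apply: eq_bigr => i _.
  rewrite peval_Z peval_Xn -mul_polyC rmorphM rmorphXn /xF -mulrA; congr (_ * _).
  have hi : (i <= n)%N by rewrite /n -ltnS prednK // (leq_ltn_trans _ hn).
  rewrite -{1}(subnKC hi) exprD mulrA exprVn mulVf ?mul1r //.
  by rewrite expf_neq0 // X_neq0.
have Q0 : Q`_0 = lead_coef d.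
  rewrite /Q coef_sum (bigD1 (Ordinal hn)) //= coefZ coefXn subnn eqxx mulr1.
  rewrite big1 ?addr0 // => i ni; rewrite coefZ coefXn.
  have : (n - i)%N != 0%N.
    apply/negP => /eqP h; move/negP: ni; apply; apply/eqP/val_inj => /=.
    have s0 : (0 < size d)%N by apply: leq_ltn_trans hn.
    apply/eqP; rewrite eqn_leq; apply/andP; split; last by rewrite -subn_eq0 h.
    by rewrite -ltnS /n prednK //; exact: ltn_ord.
  by move=> hh; rewrite eq_sym (negbTE hh) mulr0.
apply/negP => /eqP h; move: eq; rewrite h mul0r => /esym/eqP.
rewrite tofrac_eq0 => /eqP Qz.
by move: Q0; rewrite Qz coef0 => /esym/eqP; rewrite lead_coef_eq0 (negbTE d0).
Qed.

Local Notation sig := (@subst_inv F).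

Lemma sig_frac n d : d != 0 ->
  sig (tofrac n / tofrac d) = pevalF n X^-1 / pevalF d X^-1.
Proof.
move=> d0; rewrite /subst_inv /=.
set r := tofrac n / tofrac d.
have hr := frac_repr r.
set e := frac (repr r) in hr *.
have e2 : e.2 != 0 by exact: denom_ratioP.
move/eqP: hr; rewrite /r eqr_div ?tofrac_eq0 // -!rmorphM tofrac_eq => /eqP H.
have := congr1 (fun q : {poly F} => pevalF q X^-1) H; rewrite !peval_mul => H2.
apply/eqP; rewrite eqr_div ?peval_inv_neq0 //; apply/eqP; by rewrite H2.
Qed.

Lemma sig_tofrac p : sig (tofrac p) = pevalF p X^-1.
Proof.
by rewrite -[tofrac p]divr1 -(rmorph1 (@tofrac _ : {poly F} -> Fx)) sig_frac ?oner_neq0 // peval_1 divr1.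
Qed.

Lemma sig_x : sig X = X^-1.
Proof. by rewrite /xF sig_tofrac peval_X. Qed.

Lemma sig_0 : sig 0 = 0.
Proof. by rewrite -(rmorph0 (@tofrac _ : {poly F} -> Fx)) sig_tofrac peval_0. Qed.
Lemma sig_1 : sig 1 = 1.
Proof. by rewrite -(rmorph1 (@tofrac _ : {poly F} -> Fx)) sig_tofrac peval_1. Qed.

Lemma sigM a b : sig (a * b) = sig a * sig b.
Proof.
rewrite (frac_repr a) (frac_repr b).
set n1 := (frac (repr a)).1; set d1 := (frac (repr a)).2.
set n2 := (frac (repr b)).1; set d2 := (frac (repr b)).2.
have h1 : d1 != 0 by exact: denom_ratioP.
have h2 : d2 != 0 by exact: denom_ratioP.
rewrite mulf_div -!rmorphM !sig_frac ?mulf_neq0 // !peval_mul mulf_div //.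
Qed.

Lemma sigD a b : sig (a + b) = sig a + sig b.
Proof.
rewrite (frac_repr a) (frac_repr b).
set n1 := (frac (repr a)).1; set d1 := (frac (repr a)).2.
set n2 := (frac (repr b)).1; set d2 := (frac (repr b)).2.
have h1 : d1 != 0 by exact: denom_ratioP.
have h2 : d2 != 0 by exact: denom_ratioP.
rewrite addf_div ?tofrac_eq0 // -!rmorphM -rmorphD !sig_frac ?mulf_neq0 //.
by rewrite peval_add !peval_mul addf_div ?peval_inv_neq0.
Qed.

Lemma sigN a : sig (- a) = - sig a.
Proof. by apply/eqP; rewrite -subr_eq0 opprK -sigD addNr sig_0. Qed.

Lemma sigV a : sig (a^-1) = (sig a)^-1.
Proof.
have [->|a0] := eqVneq a 0; first by rewrite invr0 sig_0 invr0.
have : sig a * sig a^-1 = 1 by rewrite -sigM mulfV // sig_1.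
move=> h; have sa0 : sig a != 0 by apply/negP => /eqP e; move: h; rewrite e mul0r => /eqP; rewrite eq_sym oner_eq0.
by rewrite -[RHS]mulr1 -h mulrA mulVf // mul1r.
Qed.

Lemma sigX a k : sig (a ^+ k) = sig a ^+ k.
Proof. by elim: k => [|k IH]; rewrite ?expr0 ?sig_1 // !exprS sigM IH. Qed.

Lemma sig_peval p t : sig (pevalF p t) = pevalF p (sig t).
Proof.
elim/poly_ind: p => [|p c IH]; first by rewrite !peval_0 sig_0.
by rewrite !peval_add !peval_mul !peval_X !peval_C sigD sigM IH sig_tofrac peval_C.
Qed.

Lemma sig_invol a : sig (sig a) = a.
Proof.
rewrite {1}(frac_repr a) sig_frac; last exact: denom_ratioP.
rewrite sigM sigV !sig_peval sigV sig_x invrK !peval_x.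
exact/esym/frac_repr.
Qed.


Local Notation U := (X + X^-1).

Lemma X2 : X * X = U * X - 1.
Proof. by rewrite mulrDl mulVf ?X_neq0 // addrK. Qed.

Definition inM (m : Fx) := exists A B : {poly F}, m = pevalF A U + pevalF B U * X.

Lemma inM_tofrac p : inM (tofrac p).
Proof.
elim/poly_ind: p => [|p c [A [B IH]]].
  by exists 0, 0; rewrite rmorph0 !peval_0 mul0r addr0.
exists (c%:P - B), (A + B * 'X).
rewrite tofracD tofracM IH !peval_add peval_N !peval_mul !peval_C peval_X.
rewrite -/(xF F) mulrDl -mulrA X2; ring.
Qed.

Lemma inM_mul a b : inM a -> inM b -> inM (a * b).
Proof.
move=> [A1 [B1 ->]] [A2 [B2 ->]].
exists (A1 * A2 - B1 * B2), (A1 * B2 + B1 * A2 + B1 * B2 * 'X).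
rewrite peval_sub !peval_add !peval_mul peval_X.
set a1 := pevalF A1 U; set a2 := pevalF A2 U; set b1 := pevalF B1 U; set b2 := pevalF B2 U.
transitivity (a1 * a2 + (a1 * b2 + b1 * a2) * X + b1 * b2 * (X * X)); first by ring.
rewrite X2; ring.
Qed.

Lemma sig_U : sig U = U.
Proof. by rewrite sigD sigV sig_x invrK addrC. Qed.

Lemma sig_pevalU A : sig (pevalF A U) = pevalF A U.
Proof. by rewrite sig_peval sig_U. Qed.

Lemma inM_sig a : inM a -> inM (sig a).
Proof.
move=> [A [B ->]]; exists (A + B * 'X), (- B).
rewrite sigD sigM !sig_pevalU sig_x peval_add peval_mul peval_X.
have -> : pevalF (- B) U = - pevalF B U by rewrite peval_N.
have -> : X^-1 = U - X by rewrite [X + _]addrC addrK.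
ring.
Qed.

Lemma Xinv_neq : X^-1 - X != 0.
Proof.
apply/negP; rewrite subr_eq0 => /eqP h.
have : X * X = 1 by rewrite -{1}h mulVf ?X_neq0.
rewrite /xF -rmorphM -(rmorph1 (@tofrac _ : {poly F} -> Fx)) => /eqP.
rewrite tofrac_eq => /eqP/(congr1 (size : {poly F} -> nat)).
by rewrite -expr2 size_polyXn size_poly1.
Qed.

Lemma inM_fix m : inM m -> sig m = m -> exists A, m = pevalF A U.
Proof.
move=> [A [B ->]] h; exists A.
move: h; rewrite sigD sigM !sig_pevalU sig_x => /eqP.
rewrite -subr_eq0.
have -> : pevalF A U + pevalF B U / X - (pevalF A U + pevalF B U * X) =
  pevalF B U * (X^-1 - X) by ring.
rewrite mulf_eq0 (negbTE Xinv_neq) orbF.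
by move=> /eqP ->; rewrite mul0r addr0.
Qed.

Lemma fixed_field a : sig a = a ->
  exists C D : {poly F}, D != 0 /\ a * pevalF D U = pevalF C U.
Proof.
move=> ha.
rewrite (frac_repr a) in ha *.
set n := (frac (repr a)).1 in ha *; set d := (frac (repr a)).2 in ha *.
have d0 : d != 0 by exact: denom_ratioP.
pose E := tofrac d * sig (tofrac d).
have ME : inM E by apply: inM_mul; [apply: inM_tofrac | apply/inM_sig/inM_tofrac].
have sE : sig E = E by rewrite /E sigM sig_invol mulrC.
have [D eD] := inM_fix _ ME sE.
pose N := tofrac n * sig (tofrac d).
have MN : inM N by apply: inM_mul; [apply: inM_tofrac | apply/inM_sig/inM_tofrac].
have eN : tofrac n / tofrac d * E = N.
  by rewrite /E /N mulrA divfK // tofrac_eq0.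
have sN : sig N = N by rewrite -eN sigM ha sE.
have [C eC] := inM_fix _ MN sN.
exists C, D; split; last by rewrite -eD eN eC.
apply/negP => /eqP D0; move: eD; rewrite D0 peval_0 /E => /eqP.
rewrite mulf_eq0 tofrac_eq0 (negbTE d0) /= => /eqP h.
by move: (sig_invol (tofrac d)); rewrite h sig_0 => /eqP; rewrite eq_sym tofrac_eq0 (negbTE d0).
Qed.


Local Notation P2 := ('X^2 + 1%:P : {poly F}).

Lemma P2_monic i : P2 ^+ i \is monic.
Proof. by apply: monic_exp; apply: monicXnaddC. Qed.

Lemma P2_size i : size (P2 ^+ i) = (2 * i).+1.
Proof.
have := size_exp P2 i; rewrite size_XnaddC //=.
have : size (P2 ^+ i) != 0%N by rewrite size_poly_eq0 monic_neq0 // P2_monic.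
by case: (size _) => //= k _ ->; rewrite mulnC.
Qed.

Lemma U_transc A : pevalF A U = 0 -> A = 0.
Proof.
move=> h; apply/eqP; apply/negPn/negP => A0.
set n := (size A).-1.
have hn : (n < size A)%N by rewrite /n prednK // lt0n size_poly_eq0.
pose Q := \sum_(i < size A) A`_i *: (P2 ^+ i * 'X^(n - i)).
have eq : pevalF A U * X ^+ n = tofrac Q.
  rewrite -[A in LHS]coefK poly_def peval_sum mulr_suml /Q rmorph_sum.
  apply: eq_bigr => i _.
  rewrite peval_Z peval_Xn -mul_polyC polyC1 !rmorphM !rmorphXn rmorphD rmorph1 rmorphXn.
  rewrite -!mulrA; congr (_ * _).
  have hi : (i <= n)%N by rewrite /n -ltnS prednK // (leq_ltn_trans _ hn).
  rewrite -{1}(subnKC hi) exprD mulrA -exprMn; congr (_ * _).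
  by rewrite mulrDl mulVf ?X_neq0 // expr2.
have Q0 : Q`_(2 * n) = lead_coef A.
  rewrite /Q coef_sum (bigD1 (Ordinal hn)) //= coefZ coefMXn subnn /= subn0.
  rewrite lead_coefE -/n.
  have := P2_monic n; rewrite monicE lead_coefE P2_size /= => /eqP ->; rewrite mulr1.
  rewrite big1 ?addr0 // => i ni; rewrite coefZ coefMXn.
  have hi : (i < n)%N.
    have := ltn_ord i; rewrite ltn_neqAle; move: ni.
    have s0 : (0 < size A)%N by apply: leq_ltn_trans hn.
    move=> ni hle; rewrite ltn_neqAle; apply/andP; split.
      apply: contra ni => /eqP e; apply/eqP/val_inj => /=; exact: e.
    by rewrite -ltnS /n prednK //; exact: ltn_ord.
  case: ifP => _; first by rewrite mulr0.
  rewrite (@nth_default _ 0 (P2 ^+ i)) ?mulr0 // P2_size; lia.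
have : tofrac Q = 0 by rewrite -eq h mul0r.
move/eqP; rewrite tofrac_eq0 => /eqP Qz; move: Q0; rewrite Qz coef0 => /esym/eqP.
by rewrite lead_coef_eq0 (negbTE A0).
Qed.


End Inf.

Section P3.
Variable F : fieldType.
Local Notation Fx := {fraction {poly F}}.
Local Notation X := (xF F).
Local Notation U := (X + X^-1).
Local Notation sig := (@subst_inv F).
Lemma solve1 (R : fieldType) (e s Y b : R) : e != 0 -> Y != 0 ->
  e * (s / Y) = b -> s = b * Y / e.
Proof. by move=> e0 Y0 <-; field; rewrite ?e0 ?Y0. Qed.

Lemma solve2 (R : fieldType) (e Y b w : R) : e != 0 -> Y != 0 -> w != 0 ->
  (b * Y / e) / (w * Y / e) = b / w.
Proof. by move=> e0 Y0 w0; field; rewrite ?e0 ?Y0 ?w0. Qed.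

Lemma solve3 (R : fieldType) (a b c : R) : a * (b * c) = (a * b) * c.
Proof. by ring. Qed.

Lemma solve4 (R : fieldType) (b w d1 d2 : R) : w != 0 ->
  b * (d1 * d2) = (b / w * d2) * d1 * w.
Proof. by move=> w0; field; rewrite ?w0. Qed.

Arguments solve1 {R e s Y b}.
Arguments solve2 {R e Y b w}.
Arguments solve4 {R b w} d1 d2.
Lemma generic (f h : {poly F}) (g : nat) (e : Fx) (t : K F -> K F) (w : Fx) :
  (forall z, t z = (sig z.1, e * (sig z.2 / X ^+ g.+1))) ->
  e != 0 -> w != 0 ->
  e * (sig w / X ^+ g.+1) = w ->
  embP f * w * w = pevalF h U ->
  quotient_model f t h.
Proof.
move=> ht e0 w0 hw hf.
have Xg0 : X ^+ g.+1 != 0 by apply: expf_neq0; exact: X_neq0.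
exists (U, 0), (0, w); split.
- by rewrite ht /= (sig_U F) (sig_0 F) mul0r mulr0.
- by rewrite ht /= (sig_0 F) hw.
- by rewrite keval_fst /kmul /= mul0r add0r hf mulr0 mul0r addr0.
- move=> A B; rewrite !keval_fst /kadd /kmul /= !mulr0 !mul0r !addr0 add0r.
  case=> hA /eqP hB; split; first exact: U_transc.
  by apply: U_transc; move: hB; rewrite mulf_eq0 (negbTE w0) orbF => /eqP.
- move=> [a b]; rewrite ht => -[ha hb].
  have [C1 [D1 [D1n e1]]] := @fixed_field F a ha.
  have sb : sig b = b * X ^+ g.+1 / e := solve1 e0 Xg0 hb.
  have sw : sig w = w * X ^+ g.+1 / e := solve1 e0 Xg0 hw.
  have hbeta : sig (b / w) = b / w.
    rewrite sigM sigV sb sw; exact: solve2 e0 Xg0 w0.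
  have [C2 [D2 [D2n e2]]] := @fixed_field F _ hbeta.
  exists (C1 * D2), (C2 * D1), (D1 * D2); split; first exact: mulf_neq0 D1n D2n.
  rewrite !keval_fst /kmul /kadd /= !mulr0 !mul0r !addr0 !add0r !peval_mul.
  congr pair.
    by rewrite solve3 e1.
  by rewrite (solve4 _ _ w0) e2 -!mulrA [pevalF D1 U * _]mulrC.
Qed.

Lemma phi_sign i n : tofrac ((((-1) ^+ i * n%:R) : F)%:P) = ((-1) ^+ i * n%:R : Fx).
Proof. by rewrite rmorphM rmorphXn rmorphN rmorph1 rmorph_nat rmorphM rmorphXn rmorphN rmorph1 rmorph_nat. Qed.
Lemma phi_nat n : tofrac (((n%:R : F))%:P) = (n%:R : Fx).
Proof. by rewrite rmorph_nat rmorph_nat. Qed.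

Lemma dick_peval m (t : Fx) : (1 <= m)%N -> pevalF (dickson F m) t = dS _ t m.
Proof.
move=> hm; rewrite /dickson peval_sum.
under eq_bigr => i _ do rewrite peval_Z peval_Xn phi_sign.
rewrite /dS (big_ord_widen m (fun i => (-1) ^+ i * (da m i)%:R * t ^+ (m - 2 * i))); last lia.
rewrite big_mkcond /=; apply: eq_bigr => i _; case: ifP => [_|/negbT]; first reflexivity.
rewrite -leqNgt => hi.
rewrite da_zero; last lia.
by rewrite mulr0 mul0r.
Qed.

Lemma embP_C g c : embP (Cpoly g c) = X ^+ (2 * g + 1) + tofrac c%:P * X ^+ (g + 1) + X.
Proof. by rewrite /embP /Cpoly !tofracD -mul_polyC tofracM !tofracXn. Qed.

Lemma dick_gc g c : (1 <= g)%N ->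
  pevalF (dickson F g + c%:P) U = X ^+ g + (X ^+ g)^-1 + tofrac c%:P.
Proof.
move=> hg; rewrite peval_add peval_C dick_peval //.
by rewrite (@dS_val _ X g (X_neq0 F) hg).
Qed.

End P3.

Section Ids.
Variable R : fieldType.
Variables x y c : R.
Hypothesis x0 : x != 0.
Hypothesis y0 : y != 0.
Ltac fl := field; rewrite ?x0 ?y0 ?oner_neq0 //.
Lemma I1 : 1 * ((x^-1 / y)^-1 / (x * (x * (y * y)))) = (x * y)^-1.
Proof. by fl. Qed.
Lemma I2 : (x*(x*(y*y))*(x*(y*y)) + c*(x*(x*(y*y))) + x) / (x*y) / (x*y) = x*(y*y) + (x*(y*y))^-1 + c.
Proof. by fl. Qed.
Lemma I3 : 1 * ((x^-1 + 1) / (x^-1 / y) / (x * (y * y))) = (x + 1) / (x * y).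
Proof. by fl. Qed.
Lemma I4 : (x*(y*y)*(y*y) + c*(x*(y*y)) + x) * ((x+1)/(x*y)) * ((x+1)/(x*y)) = (x + x^-1 + 2) * (y*y + (y*y)^-1 + c).
Proof. by fl. Qed.
Lemma I5 : -1 * ((x^-1/x - 1) / (x^-1/x/y) / (x*(x*(y*y)))) = (x*x - 1)/(x*x*y).
Proof. by fl. Qed.
Lemma I6 : (x*(x*(y*y))*(x*(y*y)) + c*(x*(x*(y*y))) + x) * ((x*x-1)/(x*x*y)) * ((x*x-1)/(x*x*y)) = ((x + x^-1)^+2 - 4) * (x*(y*y) + (x*(y*y))^-1 + c).
Proof. by fl. Qed.
Lemma I7 : -1 * ((x^-1 - 1) / (x^-1 / y) / (x * (y * y))) = (x - 1)/(x*y).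
Proof. by fl. Qed.
Lemma I8 : (x*(y*y)*(y*y) + c*(x*(y*y)) + x) * ((x-1)/(x*y)) * ((x-1)/(x*y)) = (x + x^-1 - 2) * (y*y + (y*y)^-1 + c).
Proof. by fl. Qed.
End Ids.

Section P4.
Variable F : fieldType.
Local Notation Fx := {fraction {poly F}}.
Local Notation X := (xF F).
Local Notation U := (X + X^-1).
Local Notation sig := (@subst_inv F).
Lemma Xadd_neq0 (b : F) : X + tofrac b%:P != 0.
Proof. by rewrite /xF -tofracD tofrac_eq0 -size_poly_eq0 size_XaddC. Qed.
Lemma Xp1_neq0 : X + 1 != 0.
Proof. by have := Xadd_neq0 1; rewrite polyC1 tofrac1. Qed.
Lemma Xm1_neq0 : X - 1 != 0.
Proof. by have := Xadd_neq0 (-1); rewrite polyCN polyC1 tofracN tofrac1. Qed.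

Lemma sigY k : sig (X ^+ k) = (X ^+ k)^-1.
Proof. by rewrite sigX sig_x exprVn. Qed.

Lemma pw1 g : X ^+ (2 * g + 1) = X * X ^+ g * X ^+ g.
Proof. by rewrite addn1 exprS mul2n -addnn exprD mulrA. Qed.
Lemma pw2 g : X ^+ (g + 1) = X * X ^+ g.
Proof. by rewrite addn1 exprS. Qed.
Lemma pwodd k : X ^+ k.*2.+1 = X * (X ^+ k * X ^+ k).
Proof. by rewrite exprS -addnn exprD. Qed.
Lemma pweven k : X ^+ k.*2 = X ^+ k * X ^+ k.
Proof. by rewrite -addnn exprD. Qed.


Lemma peval_XsubC (a : F) (t : Fx) : pevalF ('X - a%:P) t = t - tofrac a%:P.
Proof. by rewrite peval_add peval_N peval_X peval_C. Qed.
Lemma peval_XaddC (a : F) (t : Fx) : pevalF ('X + a%:P) t = t + tofrac a%:P.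
Proof. by rewrite peval_add peval_X peval_C. Qed.
Lemma peval_X2subC (a : F) (t : Fx) : pevalF ('X^2 - a%:P) t = t ^+ 2 - tofrac a%:P.
Proof. by rewrite peval_add peval_N peval_Xn peval_C. Qed.

Lemma case_s_odd k c :
  quotient_model (Cpoly k.*2.+1 c) (inv_s k.*2.+1) (dickson F k.*2.+1 + c%:P).
Proof.
have X0 := X_neq0 F.
have Y0 : X ^+ k != 0 by apply: expf_neq0.
apply: (generic F _ _ k.*2.+1 1 _ ((X * X ^+ k)^-1)).
- by move=> z; rewrite mul1r.
- exact: oner_neq0.
- apply: invr_neq0; exact: mulf_neq0 X0 Y0.
- rewrite sigV sigM sig_x sigY exprS pwodd; exact: (@I1 _ _ _ X0 Y0).
- rewrite embP_C dick_gc // pw1 pw2 pwodd; exact: (@I2 _ _ _ _ X0 Y0).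
Qed.

Lemma case_s_even k c : (1 <= k)%N ->
  quotient_model (Cpoly k.*2 c) (inv_s k.*2) (('X + 2%:P) * (dickson F k.*2 + c%:P)).
Proof.
move=> k1.
have X0 := X_neq0 F.
have Y0 : X ^+ k != 0 by apply: expf_neq0.
apply: (generic F _ _ k.*2 1 _ ((X + 1) / (X * X ^+ k))).
- by move=> z; rewrite mul1r.
- exact: oner_neq0.
- apply: mulf_neq0; first exact: Xp1_neq0. apply: invr_neq0; exact: mulf_neq0 X0 Y0.
- rewrite sigM sigV sigM sigD sig_1 sig_x sigY exprS pweven. exact: (@I3 _ _ _ X0 Y0).
- rewrite embP_C peval_mul peval_XaddC phi_nat dick_gc; last by rewrite -mul2n; lia.
  rewrite pw1 pw2 pweven. exact: (@I4 _ _ _ _ X0 Y0).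
Qed.

Lemma case_sw_odd k c :
  quotient_model (Cpoly k.*2.+1 c) (inv_sw k.*2.+1) (('X ^+ 2 - 4%:P) * (dickson F k.*2.+1 + c%:P)).
Proof.
have X0 := X_neq0 F.
have Y0 : X ^+ k != 0 by apply: expf_neq0.
apply: (generic F _ _ k.*2.+1 (-1) _ ((X * X - 1) / (X * X * X ^+ k))).
- by move=> z; rewrite mulN1r.
- rewrite oppr_eq0; exact: oner_neq0.
- have -> : X * X - 1 = (X - 1) * (X + 1) by ring.
  apply: mulf_neq0; first exact: mulf_neq0 Xm1_neq0 Xp1_neq0.
  apply: invr_neq0; exact: mulf_neq0 (mulf_neq0 X0 X0) Y0.
- rewrite !(sigM, sigV, sigD, sigN, sig_1, sigY, sig_x) exprS pwodd. exact: (@I5 _ _ _ X0 Y0).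
- rewrite embP_C peval_mul peval_X2subC phi_nat dick_gc //.
  rewrite pw1 pw2 pwodd. exact: (@I6 _ _ _ _ X0 Y0).
Qed.

Lemma case_sw_even k c : (1 <= k)%N ->
  quotient_model (Cpoly k.*2 c) (inv_sw k.*2) (('X - 2%:P) * (dickson F k.*2 + c%:P)).
Proof.
move=> k1.
have X0 := X_neq0 F.
have Y0 : X ^+ k != 0 by apply: expf_neq0.
apply: (generic F _ _ k.*2 (-1) _ ((X - 1) / (X * X ^+ k))).
- by move=> z; rewrite mulN1r.
- rewrite oppr_eq0; exact: oner_neq0.
- apply: mulf_neq0; first exact: Xm1_neq0. apply: invr_neq0; exact: mulf_neq0 X0 Y0.
- rewrite !(sigM, sigV, sigD, sigN, sig_1, sigY, sig_x) exprS pweven. exact: (@I7 _ _ _ X0 Y0).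
- rewrite embP_C peval_mul peval_XsubC phi_nat dick_gc; last by rewrite -mul2n; lia.
  rewrite pw1 pw2 pweven. exact: (@I8 _ _ _ _ X0 Y0).
Qed.

End P4.

Theorem theorem1 (F : finFieldType) (p g : nat) (c : F) :
  prime p -> p \in [pchar F] -> (2 < p)%N ->
  (2 <= g)%N -> coprime g p ->
  separable_poly (Cpoly g c) ->
  quotient_model (Cpoly g c) (inv_s g)
    (if odd g then dickson F g + c%:P
     else ('X + 2%:P) * (dickson F g + c%:P)) /\
  quotient_model (Cpoly g c) (inv_sw g)
    (if odd g then ('X ^+ 2 - 4%:P) * (dickson F g + c%:P)
     else ('X - 2%:P) * (dickson F g + c%:P)).
Proof.
move=> _ _ _ hg _ _.
case: (boolP (odd g)) => og.
  have eg : g = (g./2).*2.+1 by rewrite -{1}(odd_double_half g) og.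
  rewrite eg; split; [exact: case_s_odd | exact: case_sw_odd].
have eg : g = (g./2).*2 by rewrite -{1}(odd_double_half g) (negbTE og).
have k1 : (1 <= g./2)%N by lia.
rewrite eg; split; [exact: case_s_even | exact: case_sw_even].
Qed.
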